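(* For every finite simple graph $G$, $\chi_{DP}(G) \le 2\,AT(G)$.
   Context: Correspondence chromatic number: a correspondence assignment $(L,C)$ for $G$ consists of a list $L(v)$ for each vertex and, for each edge $uv$, a partial matching $C_{uv}$ between $\{u\}\times L(u)$ and $\{v\}\times L(v)$; an $(L,C)$-coloring is a choice $\phi(v)\in L(v)$ for all $v$ such that for every edge $uv$, $(u,\phi(u))$ and $(v,\phi(v))$ are not matched in $C_{uv}$; $\chi_{DP}(G)$ is the least $k$ such that $G$ has an $(L,C)$-coloring for every correspondence assignment with all lists of size $k$. Alon--Tarsi number: for a digraph $D$, an Eulerian subdigraph is a spanning subdigraph $F$ with $d^+_F(v)=d^-_F(v)$ for all $v$, even or odd according to the parity of its number of edges; $AT(G)$ is the minimum $k$ such that some orientation $D$ of $G$ has all outdegrees less than $k$ and the numbers of even and odd Eulerian subdigraphs of $D$ differ. *)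

(* Defs.v *)
From mathcomp Require Import all_boot.
Set Implicit Arguments. Unset Strict Implicit. Unset Printing Implicit Defensive.

(* A finite simple graph: vertex type T : finType, adjacency adj : rel T,
   assumed symmetric and irreflexive (hypotheses of the theorem). *)

Section Defs.
Variables (T : finType) (adj : rel T).

(* A correspondence assignment with colour universe C: lists L v : {set C},
   and M u v c d <-> (u,c) is matched to (v,d) in C_uv.  Each C_uv is a
   single (symmetric) partial matching between {u}xL(u) and {v}xL(v),
   present only on edges. *)
Definition correspondence (C : finType) (L : T -> {set C})
    (M : T -> T -> C -> C -> bool) : Prop :=
  [/\ (forall u v c d, M u v c d -> [/\ adj u v, c \in L u & d \in L v]),
      (forall u v c d, M u v c d = M v u d c) &
      (forall u v c d d', M u v c d -> M u v c d' -> d = d')].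

Definition corr_coloring (C : finType) (L : T -> {set C})
    (M : T -> T -> C -> C -> bool) (phi : T -> C) : Prop :=
  (forall v, phi v \in L v) /\
  (forall u v, adj u v -> ~~ M u v (phi u) (phi v)).

Definition dp_colorable (k : nat) : Prop :=
  forall (C : finType) (L : T -> {set C}) (M : T -> T -> C -> C -> bool),
    (forall v, #|L v| = k) -> correspondence L M ->
    exists phi : T -> C, corr_coloring L M phi.

Definition is_chi_DP (k : nat) : Prop :=
  dp_colorable k /\ forall k', dp_colorable k' -> k <= k'.

Definition orientation (D : rel T) : Prop :=
  (forall u v, D u v -> adj u v) /\
  (forall u v, adj u v -> D u v (+) D v u).

Definition arcs (D : rel T) : {set T * T} := [set p | D p.1 p.2].

Definition outdeg (F : {set T * T}) (v : T) : nat := #|[set p in F | p.1 == v]|.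
Definition indeg (F : {set T * T}) (v : T) : nat := #|[set p in F | p.2 == v]|.

Definition eulerian_subdigraphs (D : rel T) : {set {set T * T}} :=
  [set F in powerset (arcs D) | [forall v, outdeg F v == indeg F v]].

Definition even_eulerian (D : rel T) : {set {set T * T}} :=
  [set F in eulerian_subdigraphs D | ~~ odd #|F|].
Definition odd_eulerian (D : rel T) : {set {set T * T}} :=
  [set F in eulerian_subdigraphs D | odd #|F|].

Definition AT_good (k : nat) : Prop :=
  exists D : rel T, [/\ orientation D,
    (forall v, outdeg (arcs D) v < k) &
    #|even_eulerian D| != #|odd_eulerian D|].

Definition is_AT (a : nat) : Prop :=
  AT_good a /\ forall b, AT_good b -> a <= b.

End Defs.

(* Main.v *)
Require Import Defs.
From mathcomp Require Import all_boot zify.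
From Stdlib Require Import Classical.

Set Implicit Arguments. Unset Strict Implicit. Unset Printing Implicit Defensive.

Section Deg.
Variables (T : finType) (adj : rel T).
Hypothesis adj_sym : symmetric adj.

Lemma card_sum (S : {set T}) (P : pred T) :
  #|[set u in S | P u]| = \sum_(u in S) (P u : nat).
Proof.
rewrite -sum1_card big_mkcond /= [RHS]big_mkcond /=.
apply: eq_bigr => u _; rewrite !inE; by case: (u \in S); case: (P u).
Qed.

Lemma mindeg (D : rel T) (a : nat) (S : {set T}) :
  orientation adj D -> (forall v, outdeg (arcs D) v < a) ->
  S != set0 -> exists2 v, v \in S & #|[set u in S | adj v u]| < 2 * a.
Proof.
move=> [hD hx] hout hS.
apply: NNPP => H.
have Hall : forall v, v \in S -> 2 * a <= #|[set u in S | adj v u]|.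
  move=> v vS; rewrite leqNgt; apply/negP => lt; apply: H; by exists v.
have e1 : forall v u, (adj v u : nat) = D v u + D u v.
  move=> v u; case Hvu: (D v u); case Huv: (D u v) => //=.
  - by move: (hx _ _ (hD _ _ Hvu)); rewrite Hvu Huv.
  - by rewrite (hD _ _ Hvu).
  - by rewrite adj_sym (hD _ _ Huv).
  - by case Ha: (adj v u) => //; move: (hx _ _ Ha); rewrite Hvu Huv.
have e2 : forall v, \sum_(u in S) (D v u : nat) <= outdeg (arcs D) v.
  move=> v; rewrite -card_sum /outdeg.
  have -> : #|[set u in S | D v u]| = #|[set (v, u) | u in [set u in S | D v u]]|.
    by rewrite card_imset // => x y [].
  apply: subset_leq_card; apply/subsetP => p /imsetP [u]; rewrite !inE => /andP [_ Hu] ->.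
  by rewrite /= eqxx andbT.
set X := \sum_(v in S) \sum_(u in S) (D v u : nat).
have hsum : \sum_(v in S) #|[set u in S | adj v u]| = X + X.
  rewrite /X [in RHS in _ = _ + RHS]exchange_big /= -big_split /=.
  apply: eq_bigr => v _; rewrite card_sum -big_split /=.
  by apply: eq_bigr => u _; rewrite e1.
have h1 : #|S| * (2 * a) <= X + X.
  by rewrite -sum_nat_const -hsum; apply: leq_sum.
have h2 : X + #|S| <= #|S| * a.
  rewrite -sum_nat_const /X -sum1_card -big_split /=.
  apply: leq_sum => v _; rewrite addn1; exact: leq_ltn_trans (e2 v) (hout v).
have : 0 < #|S| by rewrite card_gt0.
lia.
Qed.
End Deg.
Section Greedy.
Variables (T : finType) (adj : rel T).
Hypothesis adj_irr : irreflexive adj.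
Variables (C : finType) (L : T -> {set C}) (M : T -> T -> C -> C -> bool) (k : nat).
Hypothesis hL : forall v, #|L v| = k.
Hypothesis hM : correspondence adj L M.
Hypothesis hdeg : forall S : {set T}, S != set0 ->
  exists2 v, v \in S & #|[set u in S | adj v u]| < k.
Variable c0 : C.

Lemma greedy n : forall S : {set T}, #|S| <= n -> exists phi : T -> C,
  (forall v, v \in S -> phi v \in L v) /\
  (forall u v, u \in S -> v \in S -> adj u v -> ~~ M u v (phi u) (phi v)).
Proof.
case: hM => hM1 hM2 hM3.
elim: n => [|n IH] S hS.
  move: hS; rewrite leqn0 cards_eq0 => /eqP ->.
  by exists (fun _ => c0); split => [v|u v]; rewrite inE.
case: (eqVneq S set0) => [->|S0].
  by exists (fun _ => c0); split => [v|u v]; rewrite inE.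
have [v vS hv] := hdeg S0.
set S' := S :\ v.
have [|phi' [ph1 ph2]] := IH S'.
  by move: hS; rewrite /S' (cardsD1 v S) vS.
set N' := [set u in S' | adj v u].
set F := [set c | [exists u in N', M v u c (phi' u)]].
set h := fun c => odflt v [pick u in N' | M v u c (phi' u)].
have hinj : {in F &, injective h}.
  move=> c c'; rewrite !inE => /existsP [u /andP [uN Mu]] /existsP [u' /andP [uN' Mu']].
  rewrite /h; case: pickP => [w /andP [wN Mw]|/(_ u)]; last by rewrite uN Mu.
  case: pickP => [w' /andP [wN' Mw']|/(_ u')]; last by rewrite uN' Mu'.
  move=> /= ew; subst w'.
  rewrite hM2 in Mw; rewrite hM2 in Mw'.
  exact: hM3 Mw Mw'.
have hF : #|F| < k.
  rewrite -(card_in_imset hinj).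
  apply: leq_ltn_trans hv; apply: subset_leq_card; apply/subsetP => w /imsetP [c].
  rewrite /F inE => /existsP [u /andP [uN Mu]] ->.
  rewrite /h /=; case: pickP => [w' /andP [wN Mw]|/(_ u)]; last by rewrite uN Mu.
  by move: wN; rewrite /N' /S' !inE => /andP [/andP [_ ->] ->].
have : 0 < #|L v :\: F|.
  have := cardsID F (L v).
  have := subset_leq_card (subsetIr (L v) F).
  rewrite hL; lia.
rewrite card_gt0 => /set0Pn [c]; rewrite inE => /andP [cF cL].
exists (fun w => if w == v then c else phi' w); split.
  move=> w wS; case: eqP => [->//|/eqP wv]; apply: ph1.
  by rewrite /S' !inE wv.
move=> u w uS wS; case: (eqVneq u v) => [->|uv]; case: (eqVneq w v) => [->|wv].
- by rewrite adj_irr.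
- move=> Hvw; apply/negP => Hm; move: cF; rewrite inE; apply/negP/negPn/existsP.
  by exists w; rewrite Hm /N' /S' !inE wv wS Hvw.
- move=> Huv; rewrite hM2; apply/negP => Hm; move: cF; rewrite inE; apply/negP/negPn/existsP.
  have Hvu : adj v u by case: (hM1 _ _ _ _ Hm).
  by exists u; rewrite Hm /N' /S' !inE uv uS Hvu.
- by apply: ph2; rewrite /S' !inE ?uv ?wv.
Qed.
End Greedy.

Lemma min_exists (T : finType) (adj : rel T) n :
  dp_colorable adj n -> exists k, is_chi_DP adj k /\ k <= n.
Proof.
elim/ltn_ind: n => n IH hn.
case: (classic (exists2 m, m < n & dp_colorable adj m)) => [[m lt hm]|H].
  have [k [hk le]] := IH m lt hm; exists k; split => //; exact: leq_trans le (ltnW lt).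
exists n; split => //; split => // k' hk'; rewrite leqNgt; apply/negP => lt.
by apply: H; exists k'.
Qed.

Theorem theorem4 (T : finType) (adj : rel T)
    (adj_sym : symmetric adj) (adj_irr : irreflexive adj) (a : nat) :
  is_AT adj a -> exists k, is_chi_DP adj k /\ k <= 2 * a.
Proof.
move=> [[D [hor hout _]] _].
apply: min_exists => C L M hL hM.
case: (pickP (fun _ : T => true)) => [t0 _|hT]; last first.
  exists (fun v => False_rect C (Bool.diff_true_false (hT v))).
  by split => [v|u v]; have := hT v.
have : 0 < #|L t0| by rewrite hL; have := hout t0; lia.
rewrite card_gt0 => /set0Pn [c0 _].
have hdeg := mindeg adj_sym hor hout.
have [phi [p1 p2]] := greedy adj_irr hL hM hdeg c0 (max_card (mem [set: T])).
exists phi; split => [v|u v]; [apply: p1 | apply: p2]; by rewrite ?inE.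
Qed.
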